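(* Fix $\beta>2$. Let $G_\beta(x)=\frac1\beta\log x-\frac32x$ for $x>0$, $l_\beta=2/(3\beta)$, $g_\beta=G_\beta(l_\beta)$. For $y<g_\beta$ let $H_\beta(y)<l_\beta<K_\beta(y)$ be the two solutions of $G_\beta(x)=y$, and set $H_\beta(g_\beta)=K_\beta(g_\beta)=l_\beta$. For $k=1,2$ let $S_\beta^{(k)}:(-\infty,g_\beta]\to\mathbb{R}$, $S_\beta^{(k)}(y)=kH_\beta(y)+K_\beta(y)$. Then: (1) $S_\beta^{(1)}$ is decreasing on $(-\infty,g_\beta]$; (2) there exists $\tilde g_\beta<g_\beta$ such that $S_\beta^{(2)}$ is decreasing on $(-\infty,\tilde g_\beta)$ and increasing on $(\tilde g_\beta,g_\beta]$.
   Context: $G_\beta$ is increasing on $(0,l_\beta)$, decreasing on $(l_\beta,\infty)$, and tends to $-\infty$ at $0$ and at $\infty$, so $H_\beta$ and $K_\beta$ are well defined, continuous, $H_\beta$ increasing and $K_\beta$ decreasing on $(-\infty,g_\beta]$. *)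

(* Defs.v *)
From mathcomp Require Import all_boot all_order all_algebra.
From mathcomp Require Import all_classical all_reals all_analysis.
Set Implicit Arguments. Unset Strict Implicit. Unset Printing Implicit Defensive.
Import Order.TTheory GRing.Theory Num.Theory.
Local Open Scope ring_scope.

Definition Gb {R : realType} (b x : R) : R := b^-1 * ln x - 3 / 2 * x.
Definition lb {R : realType} (b : R) : R := 2 / (3 * b).
Definition gb {R : realType} (b : R) : R := Gb b (lb b).

(* Main.v *)
Require Import Defs.
From mathcomp Require Import all_boot all_order all_algebra.
From mathcomp Require Import all_classical all_reals all_analysis.
From mathcomp Require Import ring lra.
Import Order.TTheory GRing.Theory Num.Theory.
Local Open Scope ring_scope.

Section S.
Context {R : realType}.

Lemma incr_help (f df : R -> R) (c x y : R) :
  (forall z, c < z -> is_derive z 1 f (df z)) -> c < x -> x < y ->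
  (forall z, x < z < y -> 0 < df z) -> f x < f y.
Proof.
move=> D cx xy pos.
have Dz z : x <= z -> is_derive z 1 f (df z).
  by move=> xz; apply: D; exact: (lt_le_trans cx xz).
apply: (@gtr0_derive1_lt_cc _ f x y).
- move=> z; rewrite in_itv/= => /andP[xz _]; apply: ex_derive; exact: Dz (ltW xz).
- move=> z; rewrite in_itv/= => /andP[xz zy].
  rewrite derive1E; case: (Dz _ (ltW xz)) => _ ->; apply: pos; by rewrite xz zy.
- apply: derivable_within_continuous => z; rewrite in_itv/= => /andP[xz _].
  apply: ex_derive; exact: Dz.
- by rewrite in_itv/= lexx ltW.
- by rewrite in_itv/= lexx ltW.
- exact: xy.
Qed.

Lemma decr_help (f df : R -> R) (c x y : R) :
  (forall z, c < z -> is_derive z 1 f (df z)) -> c < x -> x < y ->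
  (forall z, x < z < y -> df z < 0) -> f y < f x.
Proof.
move=> D cx xy neg.
rewrite -ltrN2.
apply: (@incr_help (fun t => - f t) (fun t => - df t) c x y) => //.
  move=> z cz; have := is_deriveN (D z cz); exact.
by move=> z /neg; rewrite oppr_gt0.
Qed.

Lemma deriv_ext (f g : R -> R) (x d d' : R) :
  is_derive x 1 f d -> (forall t, f t = g t) -> d = d' -> is_derive x 1 g d'.
Proof. by move=> H /funext <- <-. Qed.

Definition phi (t : R) := t + 1 - 2 / t - 3 * ln t.

Lemma phi_der (z : R) : 0 < z -> is_derive z 1 phi (1 + 2 / z^+2 - 3 / z).
Proof.
move=> z0.
have hl := is_derive1_ln z0.
have hv := @is_deriveV R id z 1 1 (lt0r_neq0 z0 : id z != 0) (is_derive_id z 1).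
have := is_deriveB (is_deriveB (is_deriveD (is_derive_id z 1) (is_derive_cst (1:R) z 1)) (is_deriveZ (2:R) hv)) (is_deriveZ (3:R) hl).
move=> H; apply: (deriv_ext _ _ _ _ _ H) => [t|] /=; first reflexivity.
have zn : z != 0 by rewrite lt0r_neq0.
by rewrite /GRing.scale /=; field.
Qed.

Definition rho (t : R) := ln t - 2 + 4 / (t + 1).

Lemma rho_der (z : R) : 0 < z -> is_derive z 1 rho (z^-1 - 4 / (z + 1)^+2).
Proof.
move=> z0.
have hl := is_derive1_ln z0.
have z1 : z + 1 != 0 by rewrite lt0r_neq0 // addr_gt0.
have hs := is_deriveD (is_derive_id z 1) (is_derive_cst (1:R) z 1).
have hv := @is_deriveV R (id + cst 1) z (1+0) 1 z1 hs.
have := is_deriveD (is_deriveB hl (is_derive_cst (2:R) z 1)) (is_deriveZ (4:R) hv).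
move=> H; apply: (deriv_ext _ _ _ _ _ H) => [t|] /=; first reflexivity.
rewrite /GRing.scale /= -[(id + cst 1) z]/(z + 1); field; rewrite z1 lt0r_neq0 //.
Qed.

Definition mu (t : R) := t - 1 / t - 2 * ln t.

Lemma mu_der (z : R) : 0 < z -> is_derive z 1 mu (1 + 1 / z^+2 - 2 / z).
Proof.
move=> z0.
have hl := is_derive1_ln z0.
have hv := @is_deriveV R id z 1 1 (lt0r_neq0 z0 : id z != 0) (is_derive_id z 1).
have := is_deriveB (is_deriveB (is_derive_id z 1) (is_deriveZ (1:R) hv)) (is_deriveZ (2:R) hl).
move=> H; apply: (deriv_ext _ _ _ _ _ H) => [t|] /=; first reflexivity.
have zn : z != 0 by rewrite lt0r_neq0.
by rewrite /GRing.scale /=; field.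
Qed.

Definition chi (t : R) := 3 - 9 / (t + 2) - ln t.

Lemma chi_der (z : R) : 0 < z -> is_derive z 1 chi (9 / (z + 2)^+2 - z^-1).
Proof.
move=> z0.
have hl := is_derive1_ln z0.
have z1 : z + 2 != 0 by rewrite lt0r_neq0 // addr_gt0.
have hs := is_deriveD (is_derive_id z 1) (is_derive_cst (2:R) z 1).
have hv := @is_deriveV R (id + cst 2) z (1+0) 1 z1 hs.
have := is_deriveB (is_deriveB (is_derive_cst (3:R) z 1) (is_deriveZ (9:R) hv)) hl.
move=> H; apply: (deriv_ext _ _ _ _ _ H) => [t|] /=; first reflexivity.
by rewrite /GRing.scale /= -[(id + cst 2) z]/(z + 2); field; rewrite z1 lt0r_neq0 //.
Qed.

Definition F (m t : R) := ln t * (1 + m / (t - 1)).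

Lemma F_der (m z : R) : 1 < z ->
  is_derive z 1 (F m) (((z - 1) * (z - 1 + m) / z - m * ln z) / (z - 1)^+2).
Proof.
move=> z1.
have z0 : 0 < z by apply: lt_trans z1.
have hl := is_derive1_ln z0.
have zn : z - 1 != 0 by rewrite lt0r_neq0 // subr_gt0.
have hs := is_deriveB (is_derive_id z 1) (is_derive_cst (1:R) z 1).
have hv := @is_deriveV R (id - cst 1) z (1-0) 1 zn hs.
have H : is_derive z 1 (F m) (ln z * (0 + m * (- (z - 1) ^- 2 * (1 - 0))) + (1 + m / (z - 1)) * z^-1) :=
  is_deriveM hl (is_deriveD (is_derive_cst (1:R) z 1) (is_deriveZ m hv)).
apply: (deriv_ext _ _ _ _ _ H) => [t|] //.
have zn' : z != 0 by rewrite lt0r_neq0.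
by field; rewrite zn zn'.
Qed.


Lemma ln_lt_sub1 (u : R) : 0 < u -> u != 1 -> ln u < u - 1.
Proof.
move=> u0 u1.
have hn : ln u != 0 by rewrite ln_eq0.
have := expR_gt1Dx hn; rewrite lnK ?posrE // => h; lra.
Qed.

Lemma ln_gt_1V (u : R) : 0 < u -> u != 1 -> 1 - u^-1 < ln u.
Proof.
move=> u0 u1.
have := @ln_lt_sub1 u^-1; rewrite invr_gt0 u0 invr_eq1 u1 lnV ?posrE // => h.
have := h isT isT; lra.
Qed.

Lemma sq_pos (a : R) : a != 0 -> 0 < a ^+ 2.
Proof. by move=> a0; rewrite exprn_even_gt0. Qed.

Lemma mu_pos (t : R) : 1 < t -> 0 < mu t.
Proof.
move=> t1.
have -> : 0 = mu 1 by rewrite /mu ln1; field.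
apply: (@incr_help mu (fun z => 1 + 1 / z^+2 - 2 / z) 0 1 t); [exact: mu_der | lra | lra |].
move=> z /andP[z1 _].
have z0 : 0 < z by apply: lt_trans z1.
rewrite (_ : _ - _ = (z - 1)^+2 / z^+2); last by field; rewrite lt0r_neq0.
have p1 : 0 < (z - 1)^+2 by apply: sq_pos; rewrite lt0r_neq0 // subr_gt0.
have p2 : 0 < z^+2 by apply: sq_pos; rewrite lt0r_neq0.
by rewrite divr_gt0.
Qed.

Lemma rho_pos (t : R) : 1 < t -> 0 < rho t.
Proof.
move=> t1.
have -> : 0 = rho 1 by rewrite /rho ln1; field.
apply: (@incr_help rho (fun z => z^-1 - 4 / (z + 1)^+2) 0 1 t); [exact: rho_der | lra | lra |].
move=> z /andP[z1 _].
have z0 : 0 < z by apply: lt_trans z1.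
have zz : z + 1 != 0 by rewrite lt0r_neq0 // addr_gt0.
rewrite (_ : _ - _ = (z - 1)^+2 / (z * (z + 1)^+2)); last by field; rewrite zz lt0r_neq0.
have p1 : 0 < (z - 1)^+2 by apply: sq_pos; rewrite lt0r_neq0 // subr_gt0.
have p2 : 0 < (z + 1)^+2 by apply: sq_pos.
by rewrite divr_gt0 // mulr_gt0.
Qed.

Lemma chi_pos (t : R) : 1 < t -> t <= 4 -> 0 < chi t.
Proof.
move=> t1 t4.
have -> : 0 = chi 1 by rewrite /chi ln1; field.
apply: (@incr_help chi (fun z => 9 / (z + 2)^+2 - z^-1) 0 1 t); [exact: chi_der | lra | lra |].
move=> z /andP[z1 zt].
have z0 : 0 < z by apply: lt_trans z1.
have zz : z + 2 != 0 by rewrite lt0r_neq0 // addr_gt0.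
rewrite (_ : _ - _ = ((z - 1) * (4 - z)) / (z * (z + 2)^+2)); last by field; rewrite zz lt0r_neq0.
have p2 : 0 < (z + 2)^+2 by apply: sq_pos.
have p1 : 0 < (z - 1) * (4 - z) by apply: mulr_gt0; lra.
by rewrite divr_gt0 // mulr_gt0.
Qed.

Lemma phi1 : phi 1 = 0.
Proof. by rewrite /phi ln1; field. Qed.

Lemma phi_dec (x y : R) : 1 <= x -> x < y -> y <= 2 -> phi y < phi x.
Proof.
move=> x1 xy y2.
apply: (@decr_help phi (fun z => 1 + 2 / z^+2 - 3 / z) 0 x y); [exact: phi_der | lra | lra |].
move=> z /andP[xz zy].
have z0 : 0 < z by lra.
rewrite (_ : _ - _ = ((z - 1) * (z - 2)) / z^+2); last by field; rewrite lt0r_neq0.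
rewrite pmulr_llt0 ?invr_gt0 ?sq_pos ?lt0r_neq0 //.
rewrite pmulr_rlt0; lra.
Qed.

Lemma phi_inc (x y : R) : 2 <= x -> x < y -> phi x < phi y.
Proof.
move=> x2 xy.
apply: (@incr_help phi (fun z => 1 + 2 / z^+2 - 3 / z) 0 x y); [exact: phi_der | lra | lra |].
move=> z /andP[xz zy].
have z0 : 0 < z by lra.
rewrite (_ : _ - _ = ((z - 1) * (z - 2)) / z^+2); last by field; rewrite lt0r_neq0.
rewrite divr_gt0 ?sq_pos ?lt0r_neq0 //.
rewrite mulr_gt0 //; lra.
Qed.

Lemma ln2_lt : ln (2:R) < 3 / 4.
Proof.
have ha := @expR_ge1Dx R (3/32).
set a := expR (3/32) in ha.
have ea : expR (3/4) = a ^+ 8.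
  by rewrite /a -expRM_natl; congr expR; field.
have a2 : 1196/1000 <= a * a by nra.
have a4 : 143/100 <= (a * a) * (a * a) by nra.
have a8 : 204/100 <= ((a * a) * (a * a)) * ((a * a) * (a * a)) by nra.
have e2 : 2 < expR (3/4 : R) by rewrite ea (_ : a ^+ 8 = ((a * a) * (a * a)) * ((a * a) * (a * a))); [lra | ring].
by rewrite -ltr_expR lnK ?posrE.
Qed.

Lemma phi4 : 0 < phi 4.
Proof.
have l4 : ln (4:R) = ln 2 *+ 2.
  by rewrite -lnXn // expr2; congr ln; lra.
rewrite /phi l4 mulr2n; have := ln2_lt; lra.
Qed.

End S.

Set Implicit Arguments. Unset Strict Implicit.

Section T.
Context {R : realType}.

Lemma phi_thr : exists ts : R, [/\ 2 <= ts, ts <= 4,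
  (forall z, 1 < z -> z < ts -> phi z < 0) & (forall z, ts < z -> 0 < phi z)].
Proof.
pose E : set R := fun z => (2 <= z <= 4) /\ phi z <= 0.
have E2 : E 2.
  split; first by apply/andP; split; lra.
  rewrite -(@phi1 R); apply/ltW/phi_dec; lra.
have ub4 : ubound E 4 by move=> z [/andP[_ ?] _].
have hs : has_sup E by split; [exists 2 | exists 4].
have ts2 : 2 <= sup E by apply: sup_upper_bound.
have ts4 : sup E <= 4 by apply: ge_sup => //; exists 2.
exists (sup E); split => //.
- move=> z z1 zt.
  have [z2|z2] := leP z 2.
    rewrite -(@phi1 R); apply: phi_dec; lra.
  have [e [_ pe] ze] := @sup_adherent R E (sup E - z) ltac:(lra) hs.
  apply: (lt_le_trans _ pe); apply: phi_inc; lra.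
- move=> z zt.
  have [z4|z4] := leP z 4.
    rewrite ltNge; apply/negP => pz.
    have : E z by split => //; apply/andP; split; lra.
    move/(sup_upper_bound hs) => ?; lra.
  apply: lt_trans (@phi4 R) _; apply: phi_inc; lra.
Qed.



Definition dF (m z : R) := ((z - 1) * (z - 1 + m) / z - m * ln z) / (z - 1)^+2.

Lemma dF_sign (m z : R) (N : R) : 1 < z ->
  (z - 1) * (z - 1 + m) / z - m * ln z = N ->
  (0 < N -> 0 < dF m z) /\ (N < 0 -> dF m z < 0).
Proof.
move=> z1 e.
have p : 0 < (z - 1)^+2 by apply: sq_pos; rewrite lt0r_neq0 // subr_gt0.
rewrite /dF e; split => h.
  by rewrite divr_gt0.
by rewrite pmulr_llt0 // invr_gt0.
Qed.

Lemma F2_inc (u v : R) : 1 < u -> u < v -> F 2 u < F 2 v.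
Proof.
move=> u1 uv.
apply: (@incr_help _ (F 2) (dF 2) 1 u v); [exact: F_der | exact: u1 | exact: uv |].
move=> z /andP[uz _].
have z1 : 1 < z by apply: lt_trans uz.
have z0 : 0 < z by apply: lt_trans z1.
apply: (proj1 (dF_sign (N := mu z) z1 _)); last exact: mu_pos.
rewrite /mu; field; rewrite lt0r_neq0 //.
Qed.

Lemma F3_inc (ts u v : R) : 1 < ts -> (forall z, ts < z -> 0 < phi z) ->
  ts <= u -> u < v -> F 3 u < F 3 v.
Proof.
move=> ts1 hp tu uv.
have u1 : 1 < u by apply: lt_le_trans tu.
apply: (@incr_help _ (F 3) (dF 3) 1 u v); [exact: F_der | exact: u1 | exact: uv |].
move=> z /andP[uz _].
have z1 : 1 < z by apply: lt_trans uz.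
have z0 : 0 < z by apply: lt_trans z1.
apply: (proj1 (dF_sign (N := phi z) z1 _)); last by apply: hp; apply: le_lt_trans uz.
rewrite /phi; field; rewrite lt0r_neq0 //.
Qed.

Lemma F3_dec (ts u v : R) : (forall z, 1 < z -> z < ts -> phi z < 0) ->
  1 < u -> u < v -> v <= ts -> F 3 v < F 3 u.
Proof.
move=> hn u1 uv vt.
apply: (@decr_help _ (F 3) (dF 3) 1 u v); [exact: F_der | exact: u1 | exact: uv |].
move=> z /andP[uz zv].
have z1 : 1 < z by apply: lt_trans uz.
have z0 : 0 < z by apply: lt_trans z1.
apply: (proj2 (dF_sign (N := phi z) z1 _)); last by apply: hn => //; apply: lt_le_trans vt.
rewrite /phi; field; rewrite lt0r_neq0 //.
Qed.

Lemma F2_gt (u : R) : 1 < u -> 2 < F 2 u.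
Proof.
move=> u1.
have u0 : 0 < u by apply: lt_trans u1.
have u10 : 0 < u - 1 by rewrite subr_gt0.
have e : F 2 u - 2 = (u + 1) / (u - 1) * rho u.
  rewrite /F /rho; field.
  by rewrite !lt0r_neq0 // addr_gt0.
have : 0 < (u + 1) / (u - 1) * rho u.
  by rewrite mulr_gt0 ?rho_pos // divr_gt0 // addr_gt0.
rewrite -e; lra.
Qed.

Lemma F3_lt (u : R) : 1 < u -> u <= 4 -> F 3 u < 3.
Proof.
move=> u1 u4.
have u0 : 0 < u by apply: lt_trans u1.
have u10 : 0 < u - 1 by rewrite subr_gt0.
have e : 3 - F 3 u = (u + 2) / (u - 1) * chi u.
  rewrite /F /chi; field.
  by rewrite !lt0r_neq0 // addr_gt0.
have : 0 < (u + 2) / (u - 1) * chi u.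
  by rewrite mulr_gt0 ?chi_pos // divr_gt0 // addr_gt0.
rewrite -e; lra.
Qed.

Section B.
Variable b : R.
Hypothesis hb : 0 < b.

Lemma lb_pos : 0 < lb b.
Proof. by rewrite /lb divr_gt0 // mulr_gt0. Qed.

Lemma lbE : lb b = 2 / 3 * b^-1.
Proof. rewrite /lb; field; rewrite lt0r_neq0 //. Qed.

Lemma G_inc (x y : R) : 0 < x -> x < y -> y <= lb b -> Gb b x < Gb b y.
Proof.
move=> x0 xy yl.
have y0 : 0 < y by apply: lt_trans xy.
have yx0 : 0 < y / x by rewrite divr_gt0.
have yx1 : y / x != 1.
  by apply/eqP => /(congr1 (fun u => u * x)); rewrite mulfVK ?lt0r_neq0 // mul1r => e; lra.
have := @ln_gt_1V R (y / x) yx0 yx1.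
rewrite invf_div ln_div ?posrE // => q.
rewrite lbE in yl.
rewrite /Gb.
set ib := b^-1 in yl *.
have ib0 : 0 < ib by rewrite invr_gt0.
have e1 : x / y = x * y^-1 by [].
set iy := y^-1 in e1.
have yiy : y * iy = 1 by rewrite mulfV ?lt0r_neq0.
have iy0 : 0 < iy by rewrite invr_gt0.
rewrite e1 in q.
have h1 : 3 / 2 <= ib * iy by nra.
have h2 : ib * ((y - x) * iy) < ib * (ln y - ln x) by nra.
nra.
Qed.

Lemma G_dec (x y : R) : lb b <= x -> x < y -> Gb b y < Gb b x.
Proof.
move=> xl xy.
have x0 : 0 < x by apply: lt_le_trans lb_pos xl.
have y0 : 0 < y by apply: lt_trans xy.
have yx0 : 0 < y / x by rewrite divr_gt0.
have yx1 : y / x != 1.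
  by apply/eqP => /(congr1 (fun u => u * x)); rewrite mulfVK ?lt0r_neq0 // mul1r => e; lra.
have := @ln_lt_sub1 R (y / x) yx0 yx1.
rewrite ln_div ?posrE // => q.
rewrite lbE in xl.
rewrite /Gb.
set ib := b^-1 in xl *.
have ib0 : 0 < ib by rewrite invr_gt0.
have e1 : y / x = y * x^-1 by [].
set ix := x^-1 in e1.
have xix : x * ix = 1 by rewrite mulfV ?lt0r_neq0.
have ix0 : 0 < ix by rewrite invr_gt0.
rewrite e1 in q.
have h1 : ib * ix <= 3 / 2 by nra.
have h2 : ib * (ln y - ln x) < ib * ((y - x) * ix) by nra.
nra.
Qed.

Lemma G_injl (x y : R) : 0 < x -> x <= lb b -> 0 < y -> y <= lb b ->
  Gb b x = Gb b y -> x = y.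
Proof.
move=> x0 xl y0 yl e.
have [xy|yx|//] := ltgtP x y.
- by have := G_inc x0 xy yl; rewrite e ltxx.
- by have := G_inc y0 yx xl; rewrite e ltxx.
Qed.

Lemma G_injr (x y : R) : lb b <= x -> lb b <= y -> Gb b x = Gb b y -> x = y.
Proof.
move=> xl yl e.
have [xy|yx|//] := ltgtP x y.
- by have := G_dec xl xy; rewrite e ltxx.
- by have := G_dec yl yx; rewrite e ltxx.
Qed.

Lemma rel (h k : R) : 0 < h -> h < k -> Gb b h = Gb b k ->
  h * (k / h - 1) = lb b * ln (k / h).
Proof.
move=> h0 hk e.
have k0 : 0 < k by apply: lt_trans hk.
rewrite ln_div ?posrE // lbE.
move: e; rewrite /Gb => e.
have -> : h * (k / h - 1) = k - h by field; rewrite lt0r_neq0.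
have bb : b * b^-1 = 1 by rewrite mulfV ?lt0r_neq0.
set ib := b^-1 in e bb *.
nra.
Qed.

Lemma alg (m h k L lt : R) : h != 0 -> k / h - 1 != 0 -> h * (k / h - 1) = L * lt ->
  m * h + k = L * (lt * (1 + (m + 1) / (k / h - 1))).
Proof.
move=> h0 t0 e.
rewrite mulrA -e; field.
have -> : k + -1 * h = h * (k / h - 1) by field.
by rewrite h0 mulf_neq0.
Qed.

Lemma inv_pt (s : R) : 1 < s ->
  [/\ 0 < lb b * ln s / (s - 1), lb b * ln s / (s - 1) < lb b,
      lb b < s * (lb b * ln s / (s - 1)) &
      Gb b (s * (lb b * ln s / (s - 1))) = Gb b (lb b * ln s / (s - 1))].
Proof.
move=> s1.
have s0 : 0 < s by apply: lt_trans s1.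
have s10 : 0 < s - 1 by rewrite subr_gt0.
have sn1 : s != 1 by rewrite gt_eqF.
have l0 := lb_pos.
have lns : 0 < ln s by rewrite ln_gt0.
have q1 := @ln_lt_sub1 _ s s0 sn1.
have q2 := @ln_gt_1V _ s s0 sn1.
have hs0 : 0 < lb b * ln s / (s - 1) by rewrite divr_gt0 // mulr_gt0.
have i1 : (s - 1) * (s - 1)^-1 = 1 by rewrite mulfV ?lt0r_neq0.
have ss : s * s^-1 = 1 by rewrite mulfV ?lt0r_neq0.
set is1 := (s - 1)^-1 in i1 hs0 *.
have is0 : 0 < is1 by rewrite invr_gt0.
have a1 : ln s * is1 < 1 by nra.
split => //.
- nra.
- have a2 : 1 < s * (ln s * is1) by nra.
  nra.
- rewrite /Gb lnM ?posrE //.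
  set hh := lb b * ln s * is1 in hs0 *.
  have e : hh * (s - 1) = lb b * ln s.
    by rewrite /hh -!mulrA [is1 * _]mulrC i1 mulr1.
  rewrite lbE in e.
  nra.
Qed.
End B.

End T.

Unset Implicit Arguments. Set Strict Implicit.

Theorem lemma5p6 (R : realType) (b : R) (hb : 2 < b) (H K : R -> R)
  (hHK : forall y, y < gb b ->
     [/\ 0 < H y, H y < lb b, lb b < K y, Gb b (H y) = y & Gb b (K y) = y])
  (hHg : H (gb b) = lb b) (hKg : K (gb b) = lb b) :
  (forall x y, x < y -> y <= gb b -> 1 * H y + K y < 1 * H x + K x) /\
  exists gt : R, gt < gb b /\
    (forall x y, x < y -> y < gt -> 2 * H y + K y < 2 * H x + K x) /\
    (forall x y, gt < x -> x < y -> y <= gb b -> 2 * H x + K x < 2 * H y + K y).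
Proof.
have b0 : 0 < b by apply: lt_trans hb.
have l0 := lb_pos b0.
pose t y := K y / H y.
have trange y : y < gb b -> 1 < t y.
  move=> /hHK[h0 hl lk _ _]; rewrite /t ltr_pdivlMr // mul1r.
  by apply: lt_trans lk.
have Sform m y : y < gb b -> m * H y + K y = lb b * F (m + 1) (t y).
  move=> yg; have [h0 hl lk gh gk] := hHK y yg.
  have hk : H y < K y by apply: lt_trans lk.
  have t1 := trange y yg.
  apply: alg; first by rewrite lt0r_neq0.
    by rewrite lt0r_neq0 // subr_gt0.
  by apply: (rel b0) => //; rewrite gh gk.
have tmono x y : x < y -> y < gb b -> t y < t x.
  move=> xy yg.
  have xg : x < gb b by apply: lt_trans yg.
  have [hx0 hxl lkx ghx gkx] := hHK x xg.
  have [hy0 hyl lky ghy gky] := hHK y yg.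
  have Hxy : H x < H y.
    have [//|] := ltP (H x) (H y).
    rewrite le_eqVlt => /predU1P[e|lt].
      by move: xy; rewrite -ghx -ghy e ltxx.
    by have := G_inc b0 hy0 lt (ltW hxl); rewrite ghx ghy => ?; lra.
  have Kxy : K y < K x.
    have [//|] := ltP (K y) (K x).
    rewrite le_eqVlt => /predU1P[e|lt].
      by move: xy; rewrite -gkx -gky e ltxx.
    by have := G_dec b0 (ltW lkx) lt; rewrite gkx gky => ?; lra.
  rewrite /t ltr_pdivrMr // mulrAC ltr_pdivlMr //.
  have hxp : 0 < K x by apply: lt_trans lkx.
  have hyp : 0 < K y by apply: lt_trans lky.
  nra.
have inv s : 1 < s -> exists y0, y0 < gb b /\ t y0 = s.
  move=> s1; have [hs0 hsl lks gks] := inv_pt b0 s1.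
  set hs := lb b * ln s / (s - 1) in hs0 hsl lks gks.
  exists (Gb b hs).
  have yg : Gb b hs < gb b by apply: (G_inc b0) => //.
  split => //.
  have [h0 hl lk gh gk] := hHK _ yg.
  rewrite /t.
  have -> : H (Gb b hs) = hs.
    by apply: (G_injl b0) => //; apply: ltW.
  have -> : K (Gb b hs) = s * hs.
    by apply: (G_injr b0); rewrite ?(ltW lks) ?(ltW lk) // gks.
  by rewrite mulfK // lt0r_neq0.
have [ts [ts2 ts4 hneg hpos]] := @phi_thr R.
have ts1 : 1 < ts by lra.
have [gt [gtg tgt]] := inv ts ts1.
have tA y : y < gt -> ts < t y.
  by move=> ygt; rewrite -tgt; apply: tmono.
have tB x : gt < x -> x < gb b -> t x < ts.
  by move=> gx xg; rewrite -tgt; apply: tmono.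
have e2 : (1:R) + 1 = 2 by lra.
have e3 : (2:R) + 1 = 3 by lra.
split.
  move=> x y xy yg.
  have xg : x < gb b by apply: lt_le_trans yg.
  move: yg; rewrite le_eqVlt => /predU1P[->|yg].
    rewrite hHg hKg (Sform 1 x xg) e2.
    have := F2_gt (trange x xg); nra.
  rewrite (Sform 1 x xg) (Sform 1 y yg) e2 ltr_pM2l //.
  exact: F2_inc (trange y yg) (tmono x y xy yg).
exists gt; split => //; split.
  move=> x y xy ygt.
  have yg : y < gb b by apply: lt_trans gtg.
  have xg : x < gb b by apply: lt_trans yg.
  rewrite (Sform 2 x xg) (Sform 2 y yg) e3 ltr_pM2l //.
  apply: (F3_inc ts1 hpos) (tmono x y xy yg).
  exact: ltW (tA y ygt).
move=> x y gx xy yg.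
have xg : x < gb b by apply: lt_le_trans yg.
move: yg; rewrite le_eqVlt => /predU1P[->|yg].
  rewrite hHg hKg (Sform 2 x xg) e3.
  have := F3_lt (trange x xg) (ltW (lt_le_trans (tB x gx xg) ts4)); nra.
rewrite (Sform 2 x xg) (Sform 2 y yg) e3 ltr_pM2l //.
apply: (F3_dec hneg (trange y yg) (tmono x y xy yg)).
exact: ltW (tB x gx xg).
Qed.
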